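(* Let $H=(V,E)$ be an $\alpha$-acyclic hypergraph and let $T=(E,\mathcal{E})$ be a join tree of $H$. Define \[\mathrm{MC}^H_\cap=\Big\{w\in\mathbb{R}^{\mathcal{J}^H}_{\ge 0}\ \Big|\ w(I)=1\ \forall I\in V;\ w_i-\sum_{J\in\mathcal{J}^e:\, J\ni i}w_J=0\ \forall e\in E,\ i\in I\in e;\ \sum_{J\in\mathcal{J}^e:\,J\supseteq J_0}w_J-\sum_{J\in\mathcal{J}^{e'}:\,J\supseteq J_0}w_J=0\ \forall e,e'\in E \text{ with } |e\cap e'|>1,\ J_0\in\mathcal{J}^{e\cap e'}\Big\}\] and let $\mathrm{MC}^H_T$ be the set defined by the same constraints except that the last family of equalities is imposed only for pairs with $\{e,e'\}\in\mathcal{E}$ (and $|e\cap e'|>1$, $J_0\in\mathcal{J}^{e\cap e'}$). Then $\mathrm{MC}^H_\cap=\mathrm{MC}^H_T$.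
   Context: Let $n$ be a positive integer, $[n]=\{1,\dots,n\}$. A hypergraph $H=(V,E)$ here has as vertex set $V$ a family of pairwise disjoint subsets of $[n]$, each of cardinality at least $2$, and hyperedge set $E$ consisting of subsets $e\subseteq V$ with $|e|\ge 2$. Write $L(V)=\{\{I\}: I\in V\}$. For a nonempty $e\subseteq V$, $\mathcal{J}^e$ denotes the family of sets $J\subseteq \bigcup_{I\in e} I$ with $|J\cap I|=1$ for every $I\in e$. Let $\mathcal{J}^H=\bigcup_{e\in L(V)\cup E}\mathcal{J}^e$. For $w\in\mathbb{R}^{\mathcal{J}^H}$ write $w_i=w_{\{i\}}$ and $w(A)=\sum_{i\in A}w_i$. A join tree of $H$ is a tree $T$ with node set $E$ such that for any two distinct nodes $e_1,e_2$, every node $e$ on the unique path in $T$ between them satisfies $e_1\cap e_2\subseteq e$. $H$ is $\alpha$-acyclic in the sense of Fagin; equivalently (Beeri et al.) $H$ admits a join tree. *)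

(* Defs.v *)
From mathcomp Require Import all_boot all_order all_algebra.
From mathcomp Require Import reals.
Set Implicit Arguments. Unset Strict Implicit. Unset Printing Implicit Defensive.
Import Order.TTheory GRing.Theory Num.Theory.
Local Open Scope ring_scope.

(* Ground set [n] is modelled as 'I_n.  Vertices are subsets of 'I_n,
   hyperedges are sets of vertices, tree nodes are hyperedges. *)
Notation vtx n := {set 'I_n}.
Notation hedge n := {set {set 'I_n}}.

Definition hypergraph (n : nat) (V : {set vtx n}) (E : {set hedge n}) : Prop :=
  (forall I, I \in V -> 2 <= #|I|)%N /\
  (forall I I', I \in V -> I' \in V -> I != I' -> [disjoint I & I']) /\
  (forall e, e \in E -> e \subset V) /\
  (forall e, e \in E -> 2 <= #|e|)%N.

Definition Jfam (n : nat) (e : hedge n) : {set vtx n} :=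
  [set J : vtx n | (J \subset cover e) && [forall I in e, #|J :&: I| == 1%N]].

Definition LV (n : nat) (V : {set vtx n}) : {set hedge n} := [set [set I] | I in V].

Definition JH (n : nat) (V : {set vtx n}) (E : {set hedge n}) : {set vtx n} :=
  \bigcup_(e in LV V :|: E) Jfam e.

Definition tpath (n : nat) (t : rel (hedge n)) (x y : hedge n) (p : seq (hedge n)) :=
  [&& path t x p, last x p == y & uniq (x :: p)].

Definition is_tree (n : nat) (E : {set hedge n}) (t : rel (hedge n)) : Prop :=
  symmetric t /\ irreflexive t /\
  (forall x y, t x y -> x \in E /\ y \in E) /\
  (forall x y, x \in E -> y \in E -> exists! p, tpath t x y p).

Definition join_tree (n : nat) (E : {set hedge n}) (t : rel (hedge n)) : Prop :=
  is_tree E t /\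
  forall e1 e2, e1 \in E -> e2 \in E -> e1 != e2 ->
    forall p, tpath t e1 e2 p ->
      forall e, e \in e1 :: p -> e1 :&: e2 \subset e.

(* alpha-acyclicity, via the Beeri et al. characterization given in the context. *)
Definition alpha_acyclic (n : nat) (E : {set hedge n}) : Prop :=
  exists t, join_tree E t.

Section MC.
Variables (R : realType) (n : nat) (V : {set vtx n}) (E : {set hedge n}).
Implicit Type w : vtx n -> R.

(* Constraints common to MC_cap and MC_T (w_i = w {i}, w(I) = sum_{i in I} w_i). *)
Definition MC_common w : Prop :=
  (forall J, J \in JH V E -> 0 <= w J) /\
  (forall I, I \in V -> \sum_(i in I) w [set i] = 1) /\
  (forall e I i, e \in E -> I \in e -> i \in I ->
     w [set i] - \sum_(J in Jfam e | i \in J) w J = 0).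

Definition consistent w (e e' : hedge n) : Prop :=
  forall J0, J0 \in Jfam (e :&: e') ->
    \sum_(J in Jfam e | J0 \subset J) w J - \sum_(J in Jfam e' | J0 \subset J) w J = 0.

Definition MC_cap w : Prop :=
  MC_common w /\
  forall e e', e \in E -> e' \in E -> (1 < #|e :&: e'|)%N -> consistent w e e'.

Definition MC_T (t : rel (hedge n)) w : Prop :=
  MC_common w /\
  forall e e', e \in E -> e' \in E -> t e e' -> (1 < #|e :&: e'|)%N -> consistent w e e'.
End MC.

(* Main.v *)
Require Import Defs.
From mathcomp Require Import all_boot all_order all_algebra.
From mathcomp Require Import reals.
Set Implicit Arguments. Unset Strict Implicit. Unset Printing Implicit Defensive.
Import Order.TTheory GRing.Theory Num.Theory.
Local Open Scope ring_scope.

Section Aux.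
Variable n : nat.

Lemma L1 (f K : hedge n) (J : vtx n) : J \in Jfam f -> K \subset f ->
  J :&: cover K \in Jfam K.
Proof.
rewrite !inE => /andP[_ /forallP HJ] Kf; apply/andP; split; first exact: subsetIr.
apply/forallP => I; apply/implyP => IK.
have IsubK : I \subset cover K by apply: bigcup_sup.
rewrite -setIA (setIidPr IsubK).
by have := HJ I; rewrite (subsetP Kf _ IK).
Qed.

Lemma L2 (f K : hedge n) (J J1 : vtx n) : J \in Jfam f -> K \subset f ->
  J1 \in Jfam K -> J1 \subset J -> J :&: cover K = J1.
Proof.
rewrite !inE => /andP[_ /forallP HJ] Kf /andP[J1c /forallP HJ1] J1J.
apply/eqP; rewrite eqEsubset; apply/andP; split; last first.
  by rewrite subsetI J1J J1c.
apply/subsetP => x; rewrite inE => /andP[xJ /bigcupP[I IK xI]].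
have h1 := HJ1 I; rewrite IK /= in h1.
have h2 := HJ I; rewrite (subsetP Kf _ IK) /= in h2.
have sub : J1 :&: I \subset J :&: I by apply: setSI.
have : J1 :&: I == J :&: I by rewrite eqEcard sub (eqP h1) (eqP h2).
move=> /eqP E1.
have : x \in J :&: I by rewrite inE xJ xI.
by rewrite -E1 inE => /andP[].
Qed.

Lemma cover_sub (K K' : hedge n) : K' \subset K -> cover K' \subset cover K.
Proof.
move=> s; apply/subsetP => x /bigcupP[I IK xI]; apply/bigcupP; exists I => //.
exact: (subsetP s).
Qed.

Lemma Jfam_cover (K : hedge n) J : J \in Jfam K -> J \subset cover K.
Proof. by rewrite inE => /andP[]. Qed.

Lemma marg (R : realType) (w : vtx n -> R) (f K K' : hedge n) (J0 : vtx n) :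
  K \subset f -> K' \subset K -> J0 \in Jfam K' ->
  \sum_(J in Jfam f | J0 \subset J) w J =
  \sum_(J1 in Jfam K | J0 \subset J1) \sum_(J in Jfam f | J1 \subset J) w J.
Proof.
move=> Kf K'K J0K'.
have J0c : J0 \subset cover K := subset_trans (Jfam_cover J0K') (cover_sub K'K).
rewrite (partition_big (fun J => J :&: cover K)
   (fun J1 => (J1 \in Jfam K) && (J0 \subset J1))) /=; last first.
  move=> J /andP[JF J0J]; by rewrite (L1 JF Kf) /= subsetI J0J J0c.
apply: eq_bigr => J1 /andP[J1K J0J1]; apply: eq_bigl => J.
apply/idP/idP.
  move=> /andP[/andP[JF _] /eqP <-]; by rewrite JF subsetIl.
move=> /andP[JF J1J]; rewrite JF (subset_trans J0J1 J1J) /=.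
by rewrite (L2 JF Kf J1K J1J).
Qed.

End Aux.

Theorem lemma5p3 (R : realType) (n : nat) (V : {set {set 'I_n}})
    (E : {set {set {set 'I_n}}}) (t : rel {set {set 'I_n}}) :
  hypergraph V E -> alpha_acyclic E -> join_tree E t ->
  forall w : {set 'I_n} -> R, MC_cap V E w <-> MC_T V E t w.
Proof.
move=> _ _ [[tsym [tirr [tE tpaths]]] jt] w; split.
  by move=> [Hc Hcons]; split => // e e' eE e'E _; apply: Hcons.
move=> [Hc Hcons]; split => // e e' eE e'E Hcard J0 J0K.
set K := e :&: e'.
set S := fun f => \sum_(J in Jfam f | J0 \subset J) w J.
have step : forall f g, t f g -> K \subset f -> K \subset g -> S f = S g.
  move=> f g tfg Kf Kg; have [fE gE] := tE _ _ tfg.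
  have Kfg : K \subset f :&: g by rewrite subsetI Kf Kg.
  have cfg : (1 < #|f :&: g|)%N := leq_trans Hcard (subset_leq_card Kfg).
  have HC := Hcons f g fE gE tfg cfg.
  rewrite /S (marg w (subsetIl f g) Kfg J0K).
  rewrite (marg w (subsetIr f g) Kfg J0K).
  apply: eq_bigr => J1 /andP[J1K _]; apply/eqP; rewrite -subr_eq0.
  by apply/eqP; apply: HC.
case: (eqVneq e e') => [<-|ne]; first by rewrite subrr.
have [p [tp _]] := tpaths e e' eE e'E.
have contain := jt e e' eE e'E ne p tp.
move: tp => /and3P[pth /eqP lst _].
suff : S e = S (last e p) by rewrite lst /S => ->; rewrite subrr.
rewrite -/K in contain; clearbody K S; clear Hcard J0K; elim: p e contain pth {lst eE ne} => [|x p IH] y cont //=.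
move=> /andP[txy pth].
rewrite (step y x txy); last 2 first.
- by apply: cont; rewrite mem_head.
- by apply: cont; rewrite !inE eqxx orbT.
apply: IH => // z zin; apply: cont; rewrite inE zin orbT //.
Qed.
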